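(* Let $E$ be a (Hausdorff, real) topological vector space. Every infinite absolutely Cauchy summable subset $S$ of $E$ contains an infinite subset $B$ such that the linear Kalton map $lK_B:lS_B\to E$ is a topologically isomorphic embedding.
   Context: For $b\in E$, $\mathbb{R}b=\{rb:r\in\mathbb{R}\}$ with the subspace topology. For $B\subseteq E\setminus\{0\}$, $lS_B=\bigoplus_{b\in B}\mathbb{R}b$ is the set of finitely supported elements of $\prod_{b\in B}\mathbb{R}b$, with the subspace topology of the Tychonoff product topology (so $lS_B\cong\mathbb{R}^{(B)}$). The linear Kalton map $lK_B:lS_B\to E$ is the unique linear map extending each inclusion $\mathbb{R}b\to E$, $b\in B$. A subset $S\subseteq E$ is absolutely Cauchy summable if for every neighbourhood $U$ of $0$ there is a finite $F\subseteq S$ such that the additive subgroup generated by $S\setminus F$ is contained in $U$. *)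

(* Defs.v *)
From HB Require Import structures.
From mathcomp Require Import all_boot all_order all_algebra.
From mathcomp Require Import all_classical all_reals all_analysis.
Set Implicit Arguments. Unset Strict Implicit. Unset Printing Implicit Defensive.
Import Order.TTheory GRing.Theory Num.Theory.
Import numFieldTopology.Exports.
Local Open Scope classical_set_scope.
Local Open Scope ring_scope.

Definition add_subgroup {V : zmodType} (G : set V) : Prop :=
  G 0 /\ forall x y, G x -> G y -> G (x - y).

Definition gen_subgroup {V : zmodType} (A : set V) : set V :=
  [set x | forall G : set V, add_subgroup G -> A `<=` G -> G x].

Definition abs_cauchy_summable {E : topologicalZmodType} (S : set E) : Prop :=
  forall U : set E, nbhs (0 : E) U ->
    exists F : set E, [/\ finite_set F, F `<=` S & gen_subgroup (S `\` F) `<=` U].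

Definition supp {E : Type} {R : realType} (f : E -> R) : set E :=
  [set x | f x != 0].

(* lS_B : finitely supported real families indexed by B, realised as the
   functions E -> R with finite support contained in B, with the topology
   induced by the product (pointwise) topology. *)
Definition lS_set {R : realType} {E : Type} (B : set E) : set {ptws E -> R} :=
  [set f | finite_set (supp f) /\ supp f `<=` B].

Definition lS {R : realType} {E : Type} (B : set E) : topologicalType :=
  set_type (@lS_set R E B).

Definition lK {R : realType} {E : topologicalLmodType R} (B : set E)
  (f : @lS R E B) : E :=
  (\sum_(b \in supp (set_val f)) (set_val f b) *: b)%R.

Definition topological_embedding {X Y : topologicalType} (f : X -> Y) : Prop :=
  [/\ injective f, continuous f &
      forall U : set X, open U -> exists V : set Y, open V /\ U = f @^-1` V].

(* Main.v *)
Require Import Defs.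
From HB Require Import structures.
From mathcomp Require Import all_boot all_order all_algebra.
From mathcomp Require Import all_classical all_reals all_analysis.
From mathcomp Require Import ring lra.
Import numFieldTopology.Exports.
Import Order.TTheory GRing.Theory Num.Theory.
Local Open Scope classical_set_scope.
Local Open Scope ring_scope.
Set Implicit Arguments. Unset Strict Implicit. Unset Printing Implicit Defensive.

Lemma ptws_cvg_coord (R : realType) (X : Type) (F : set_system {ptws X -> R}) (h : {ptws X -> R}) :
  Filter F -> (forall x e, 0 < e -> F [set k | `|k x - h x| < e]) -> F --> h.
Proof.
move=> FF Fh.
apply/cvg_sup => x U.
move=> [V [ [Oo oO <-] Ohx] sub].
rewrite nbhs_filterE.
have key : F [set k : {ptws X -> R} | Oo (k x)].
2: by apply: (@filterS _ F FF [set k | Oo (k x)] U) => [k|//]; exact: sub.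
have : nbhs (h x) Oo by exact: open_nbhs_nbhs.
move=> /nbhs_ballP [e e0 Oe].
apply: filterS (Fh x e e0) => k hk; apply: Oe.
by rewrite /ball /= distrC.
Qed.

Section Basics.
Variables (R : realType) (E : topologicalLmodType R).

Definition balanced (V : set E) := forall (r : R) x, `|r| <= 1 -> V x -> V (r *: x).

Lemma add0_nbhs (U : set E) : nbhs 0 U ->
  exists V : set E, nbhs 0 V /\ (forall x y, V x -> V y -> U (x + y)).
Proof.
move=> U0.
have := @add_continuous E (0, 0) U.
rewrite /= addr0 => /(_ U0) [[P Q] /= [P0 Q0] PQ].
exists (P `&` Q); split; first exact: filterI.
by move=> x y [Px _] [_ Qy]; exact: (PQ (x, y)).
Qed.

Lemma scale0_nbhs (U : set E) : nbhs 0 U ->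
  exists2 d : R, 0 < d & exists V : set E, nbhs 0 V /\
     (forall r x, `|r| < d -> V x -> U (r *: x)).
Proof.
move=> U0.
have := @scale_continuous R E (0, 0) U.
rewrite /= scale0r => /(_ U0) [[P Q] /= [P0 Q0] PQ].
move: P0 => /nbhs_ballP [d d0 Pd].
exists d => //; exists Q; split => // r x rd Qx.
apply: (PQ (r, x)); split => //=; apply: Pd.
by rewrite /ball /= sub0r normrN.
Qed.

Lemma scalev_nbhs (U : set E) (x : E) : nbhs 0 U ->
  exists2 d : R, 0 < d & forall r, `|r| < d -> U (r *: x).
Proof.
move=> U0.
have := @scale_continuous R E (0, x) U.
rewrite /= scale0r => /(_ U0) [[P Q] /= [P0 Qx] PQ].
move: P0 => /nbhs_ballP [d d0 Pd].
exists d => // r rd.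
apply: (PQ (r, x)); split => //=; last exact: nbhs_singleton.
by apply: Pd; rewrite /ball /= sub0r normrN.
Qed.

Lemma scaleby_nbhs (U : set E) (t : R) : nbhs 0 U ->
  nbhs 0 [set x | U (t *: x)].
Proof.
move=> U0.
have := @scale_continuous R E (t, 0) U.
rewrite /= scaler0 => /(_ U0) [[P Q] /= [Pt Q0] PQ].
apply: filterS Q0 => x Qx; apply: (PQ (t, x)); split => //=.
exact: nbhs_singleton.
Qed.

Lemma trans_nbhs (U : set E) (a : E) : nbhs a U ->
  nbhs 0 [set y | U (a + y)].
Proof.
move=> Ua.
have := @add_continuous E (a, 0) U.
rewrite /= addr0 => /(_ Ua) [[P Q] /= [Pa Q0] PQ].
apply: filterS Q0 => y Qy; apply: (PQ (a, y)); split => //=.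
exact: nbhs_singleton.
Qed.

Lemma transB_nbhs (U : set E) (a : E) : nbhs 0 U ->
  nbhs a [set y | U (y - a)].
Proof.
move=> U0.
have := @add_continuous E (a, - a).
rewrite /continuous_at /= subrr => /(_ U U0) [[P Q] /= [Pa Qa] PQ].
apply: filterS Pa => y Py; apply: (PQ (y, - a)); split => //=.
exact: nbhs_singleton.
Qed.

Lemma bal_core (U : set E) : nbhs 0 U ->
  exists V : set E, [/\ nbhs 0 V, V `<=` U & balanced V].
Proof.
move=> U0; have [d d0 [W [W0 dW]]] := scale0_nbhs U0.
exists [set x | forall r : R, `|r| <= 1 -> U (r *: x)]; split.
- have := scaleby_nbhs (2 / d) W0.
  apply: filterS => x Wx r r1.
  have -> : r *: x = (r * (d / 2)) *: ((2 / d) *: x).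
    rewrite scalerA; congr (_ *: _).
    by field; rewrite gt_eqF.
  apply: dW => //.
  rewrite normrM (@le_lt_trans _ _ (1 * `|d / 2|)) //.
    by rewrite ler_wpM2r.
  rewrite mul1r gtr0_norm ?divr_gt0 //.
  by rewrite ltr_pdivrMr // ltr_pMr // ltr1n.
- by move=> x /(_ 1); rewrite normr1 scale1r; apply.
- move=> r x r1 Vx s s1; rewrite scalerA; apply: Vx.
  by rewrite normrM mulr_ile1.
Qed.

Lemma half_bal (U : set E) : nbhs 0 U ->
  exists V : set E, [/\ nbhs 0 V, balanced V &
     forall x y, V x -> V y -> U (x + y)].
Proof.
move=> /add0_nbhs [V [V0 VU]].
have [W [W0 WV Wb]] := bal_core V0.
by exists W; split => // x y /WV Vx /WV Vy; exact: VU.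
Qed.

Lemma bal_opp (V : set E) x : balanced V -> V x -> V (- x).
Proof. by move=> Vb Vx; rewrite -scaleN1r; apply: Vb; rewrite // normrN normr1. Qed.


Lemma hausdorff0 (hE : hausdorff_space E) (x : E) : x != 0 ->
  exists U : set E, nbhs 0 U /\ ~ U x.
Proof.
move=> x0; apply: contrapT => hU; move/negP: x0; apply.
apply/eqP/esym/hE => A B A0 Bx.
exists x; split; last exact: nbhs_singleton.
apply: contrapT => Ax; apply: hU; exists A; split => //.
Qed.

Section gen.
Variable A : set E.

Lemma gen_is_sub : add_subgroup (gen_subgroup A).
Proof.
split; first by move=> G [].
by move=> x y gx gy G GG AG; case: (GG) => _ GB; apply: GB; [exact: gx|exact: gy].
Qed.

Lemma gen_sub x : A x -> gen_subgroup A x.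
Proof. by move=> Ax G _ AG; exact: AG. Qed.

Lemma gen0 : gen_subgroup A 0.
Proof. by case: gen_is_sub. Qed.

Lemma genB x y : gen_subgroup A x -> gen_subgroup A y -> gen_subgroup A (x - y).
Proof. by case: gen_is_sub => _; apply. Qed.

Lemma genN x : gen_subgroup A x -> gen_subgroup A (- x).
Proof. by move=> gx; rewrite -sub0r; apply: genB => //; exact: gen0. Qed.

Lemma genD x y : gen_subgroup A x -> gen_subgroup A y -> gen_subgroup A (x + y).
Proof. by move=> gx gy; rewrite -[y]opprK; apply: genB => //; exact: genN. Qed.

Lemma genMn x n : gen_subgroup A x -> gen_subgroup A (x *+ n).
Proof.
move=> gx; elim: n => [|n IH]; first by rewrite mulr0n; exact: gen0.
by rewrite mulrS; apply: genD.
Qed.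

Lemma genMz x (z : int) : gen_subgroup A x -> gen_subgroup A (x *~ z).
Proof.
move=> gx; case: z => n /=; first exact: genMn.
by rewrite NegzE mulrNz; apply: genN; exact: genMn.
Qed.

Lemma gen_sum k (f : nat -> E) : (forall i, (i < k)%N -> gen_subgroup A (f i)) ->
  gen_subgroup A (\sum_(i < k) f i).
Proof.
elim: k => [|k IH] hf; first by rewrite big_ord0; exact: gen0.
rewrite big_ord_recr /=; apply: genD; last exact: hf.
by apply: IH => i ik; apply: hf; rewrite ltnS ltnW.
Qed.
End gen.

Lemma fincomb (U : set E) (x : nat -> E) (k : nat) : nbhs 0 U ->
  exists2 d : R, 0 < d & forall c : nat -> R,
    (forall i, (i < k)%N -> `|c i| < d) -> U (\sum_(i < k) c i *: x i).
Proof.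
elim: k U => [|k IH] U U0.
  by exists 1 => // c _; rewrite big_ord0; exact: nbhs_singleton.
have [V [V0 VU]] := add0_nbhs U0.
have [d1 d10 H1] := IH _ V0.
have [d2 d20 H2] := scalev_nbhs (x k) V0.
exists (Num.min d1 d2); first by rewrite lt_min d10 d20.
move=> c hc; rewrite big_ord_recr /=; apply: VU.
  apply: H1 => i ik; have := hc i (ltnW ik); rewrite lt_min => /andP[]//.
by apply: H2; have := hc k (ltnSn k); rewrite lt_min => /andP[].
Qed.

Lemma realspan (S : set E) (U : set E) : abs_cauchy_summable S -> nbhs 0 U ->
  exists F : set E, [/\ finite_set F, F `<=` S &
    forall k (x : nat -> E) (c : nat -> R),
      (forall i, (i < k)%N -> (S `\` F) (x i)) -> U (\sum_(i < k) c i *: x i)].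
Proof.
move=> hS U0; have [V [V0 Vb VU]] := half_bal U0.
have [F [Ffin FS FV]] := hS V V0.
exists F; split => // k x c hx.
have [d d0 Hd] := fincomb x k V0.
pose N := Num.Def.archi_bound (d^-1).
have dN : d^-1 < N%:R by apply: archi_boundP; rewrite invr_ge0 ltW.
have N0 : 0 < (N%:R : R) by apply: lt_trans dN; rewrite invr_gt0.
pose q i := Num.floor (N%:R * c i).
have -> : \sum_(i < k) c i *: x i =
   (N%:R)^-1 *: (\sum_(i < k) x i *~ q i) +
   \sum_(i < k) (c i - (N%:R)^-1 * (q i)%:~R) *: x i.
  rewrite scaler_sumr -big_split; apply: eq_bigr => i _ /=.
  by rewrite -scaler_int scalerA -scalerDl addrC subrK.
apply: VU.
  apply: Vb.
    rewrite normfV ger0_norm; last exact: ltW.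
    by rewrite invf_le1 // ler1n -(ltr0n R).
  apply: FV; apply: (@gen_sum _ k (fun i => x i *~ q i)) => i ik; apply: genMz; apply: gen_sub; exact: hx.
apply: (Hd (fun i => c i - N%:R^-1 * (q i)%:~R)) => i ik.
have /andP[h1 h2] := floor_itv (N%:R * c i).
have -> : c i - (N%:R)^-1 * (q i)%:~R = (N%:R)^-1 * (N%:R * c i - (q i)%:~R).
  by rewrite mulrBr mulrA mulVf ?gt_eqF // mul1r.
rewrite normrM ger0_norm ?invr_ge0 ?ltW //.
apply: (@le_lt_trans _ _ ((N%:R)^-1)); last by rewrite -(invrK d) ltf_pV2 ?posrE ?invr_gt0.
rewrite ger0_norm ?subr_ge0 //.
rewrite -[X in _ <= X]mulr1 ler_wpM2l ?invr_ge0 ?ltW //.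
rewrite /q; move: h2; rewrite intrD1 => h2; lra.
Qed.


Section Construction.
Variables (hE : hausdorff_space E) (S : set E).
Hypotheses (Sinf : infinite_set S) (hS : abs_cauchy_summable S).

Definition State := ((nat -> E) * set E * set E)%type.
Definition sb (s : State) := s.1.1.
Definition sP (s : State) := s.1.2.
Definition sW (s : State) := s.2.

Definition Inv n (s : State) : Prop :=
 [/\ nbhs 0 (sP s), nbhs 0 (sW s), balanced (sW s),
     (forall x y, sW s x -> sW s y -> sP s (x + y)) &
     (forall c : nat -> R, sP s (\sum_(i < n) c i *: sb s i) ->
        forall i, (i < n)%N -> `|c i| < 1)].

Definition Rel n (s s' : State) : Prop :=
 [/\ S (sb s' n), (forall i, (i < n)%N -> sb s' i = sb s i) &
   exists W' : set E, [/\ forall r, W' (r *: sb s' n),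
       (forall x y, W' x -> W' y -> sW s (x + y)) & sW s' `<=` W']].

Lemma step n s : Inv n s -> exists s', Inv n.+1 s' /\ Rel n s s'.
Proof.
case=> P0 W0 Wb WP Pc.
have WsP x : sW s x -> sP s x.
  by move=> Wx; rewrite -[x]addr0; apply: WP => //; exact: nbhs_singleton.
have [W' [W'0 W'b W'W]] := half_bal W0.
have [F [Ffin FS FW']] := hS W'0.
have : S `\` (F `|` [set 0]) != set0.
  have fU : finite_set (F `|` [set 0]) by rewrite finite_setU; split => //; exact: finite_set1.
  apply/eqP => h; move: (infinite_setD Sinf fU).
  by rewrite h; apply; exact: finite_set0.
case/set0P => e [Se /not_orP [Fe /eqP e0]].
have Rb r : W' (r *: e).
  pose m := Num.Def.archi_bound `|r|.
  have rm : `|r| < m%:R by apply: archi_boundP.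
  have m0 : (m%:R : R) != 0 by rewrite gt_eqF // (le_lt_trans _ rm).
  have -> : r *: e = (r / m%:R) *: (e *+ m).
    by rewrite -[e *+ m]scaler_nat scalerA mulfVK.
  apply: W'b; last first.
    by apply: FW'; apply: genMn; apply: gen_sub.
  rewrite normrM normfV (ger0_norm (ler0n _ _)) ler_pdivrMr; last first.
    by rewrite (le_lt_trans _ rm).
  by rewrite mul1r ltW.
have [Q1 [Q10 Q1e]] := hausdorff0 hE e0.
have [Q2 [Q20 Q2b Q2Q1]] := half_bal Q10.
have [d d0 Hd] := fincomb (sb s) n Q20.
pose O := Q2 `&` [set x | W' (d^-1 *: x)].
have O0 : nbhs 0 O by apply: filterI => //; exact: scaleby_nbhs.
have Osep (c : nat -> R) : ~ O (e + \sum_(i < n) c i *: sb s i).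
  set l := \sum_(i < n) c i *: sb s i.
  move=> [Ox Wx].
  have Pl : sP s (\sum_(i < n) (d^-1 * c i) *: sb s i).
    have -> : \sum_(i < n) (d^-1 * c i) *: sb s i = d^-1 *: l.
      by rewrite /l scaler_sumr; apply: eq_bigr => i _; rewrite scalerA.
    apply: WsP.
    have -> : d^-1 *: l = d^-1 *: (e + l) + - (d^-1 *: e).
      by rewrite scalerDr addrAC subrr add0r.
    by apply: W'W => //; apply: bal_opp => //; exact: Rb.
  have lQ2 : Q2 l.
    apply: (Hd c) => i ilt.
    have := Pc (fun i => d^-1 * c i) Pl i ilt.
    rewrite normrM gtr0_norm ?invr_gt0 // => h.
    have : d * (d^-1 * `|c i|) < d * 1 by rewrite ltr_pM2l.
    by rewrite mulrA divff ?gt_eqF // mul1r mulr1.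
  apply: Q1e; have := Q2Q1 _ _ Ox (bal_opp Q2b lQ2).
  by rewrite addrK.
have [P' [P'0 P'sub P'b]] := bal_core (filterI O0 W'0).
have [W'' [W''0 W''b W''P']] := half_bal P'0.
pose b' := fun i => if i == n then e else sb s i.
have sumb' (c : nat -> R) : \sum_(i < n.+1) c i *: b' i =
    \sum_(i < n) c i *: sb s i + c n *: e.
  rewrite big_ord_recr /= /b' eqxx; congr (_ + _).
  by apply: eq_bigr => i _; rewrite ltn_eqF.
exists (b', P', W''); split; last first.
  split => //=.
  - by rewrite /sb /= /b' eqxx.
  - by move=> i ilt; rewrite /sb /= /b' ltn_eqF.
  exists W'; split => //.
  - by move=> r; rewrite /sb /= /b' eqxx.
  - move=> x Wx; rewrite /sW /= in Wx.
    have := W''P' _ _ Wx (nbhs_singleton W''0); rewrite addr0.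
    by move/P'sub => [].
split => //.
move=> c; rewrite /sb /sP /= sumb' => Hx.
set l := \sum_(i < n) c i *: sb s i in Hx.
have cn : `|c n| < 1.
  rewrite ltNge; apply/negP => cn1.
  have cn0 : c n != 0 by rewrite -normr_gt0 (lt_le_trans _ cn1).
  have := P'b (c n)^-1 _ _ Hx.
  rewrite normfV invf_le1 ?(lt_le_trans _ cn1) // => /(_ cn1) /P'sub [Ox _].
  apply: (Osep (fun i => (c n)^-1 * c i)).
  suff <- : (c n)^-1 *: (l + c n *: e) = e + \sum_(i < n) ((c n)^-1 * c i) *: sb s i by [].
  rewrite scalerDr scalerA mulVf // scale1r addrC /l scaler_sumr.
  by congr (_ + _); apply: eq_bigr => i _; rewrite scalerA.
move=> i; rewrite ltnS leq_eqVlt => /orP [/eqP -> // | ilt].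
apply: (Pc c) => //; apply: WsP.
suff : sW s l by [].
have -> : l = (l + c n *: e) + (- c n) *: e by rewrite scaleNr addrK.
apply: W'W; first by have /P'sub [] := Hx.
exact: Rb.
Qed.


Definition s0 : State := (fun _ => 0, setT, setT).

Lemma Inv0 : Inv 0 s0.
Proof.
split; rewrite /sP /sW /= //; exact: filterT.
Qed.

Definition nextS n s : State :=
  match pselect (Inv n s) with
  | left H => proj1_sig (cid (step H))
  | right _ => s
  end.

Lemma nextS_spec n s : Inv n s -> Inv n.+1 (nextS n s) /\ Rel n s (nextS n s).
Proof.
rewrite /nextS; case: pselect => // H _.
exact: (proj2_sig (cid (step H))).
Qed.

Fixpoint st n : State := if n is m.+1 then nextS m (st m) else s0.

Lemma st_inv n : Inv n (st n).
Proof. elim: n => [|n IH]; first exact: Inv0. exact: (nextS_spec IH).1. Qed.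

Lemma st_rel n : Rel n (st n) (st n.+1).
Proof. exact: (nextS_spec (st_inv n)).2. Qed.

Definition bF i := sb (st i.+1) i.

Lemma st_b m i : (i < m)%N -> sb (st m) i = bF i.
Proof.
elim: m => [//|m IH]; rewrite ltnS leq_eqVlt => /orP [/eqP ->|im].
  by [].
case: (st_rel m) => _ H _; rewrite H //; exact: IH.
Qed.

Lemma bS i : S (bF i).
Proof. by case: (st_rel i). Qed.

Lemma sum_st n (c : nat -> R) :
  \sum_(i < n) c i *: sb (st n) i = \sum_(i < n) c i *: bF i.
Proof. by apply: eq_bigr => i _; rewrite st_b. Qed.

Lemma F1 n (c : nat -> R) : sP (st n) (\sum_(i < n) c i *: bF i) ->
  forall i, (i < n)%N -> `|c i| < 1.
Proof. by case: (st_inv n) => _ _ _ _ H; rewrite -sum_st; exact: H. Qed.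

Lemma tail k n (c : nat -> R) :
  sW (st n) (\sum_(i < k) c (n + i)%N *: bF (n + i)%N).
Proof.
elim: k n => [|k IH] n.
  by rewrite big_ord0; case: (st_inv n) => _ W0 _ _ _; exact: nbhs_singleton.
rewrite big_ord_recl /=.
case: (st_rel n) => _ _ [W' [Wb WW Wsub]].
apply: WW; first by rewrite addn0; exact: Wb.
apply: Wsub.
have -> : \sum_(i < k) c (n + bump 0 i)%N *: bF (n + bump 0 i)%N =
          \sum_(i < k) c (n.+1 + i)%N *: bF (n.+1 + i)%N.
  by apply: eq_bigr => i _; rewrite /bump /= add1n addnS.
exact: IH.
Qed.

Lemma sum_split (f : nat -> E) n N : (n <= N)%N ->
  \sum_(i < N) f i = \sum_(i < n) f i + \sum_(i < N - n) f (n + i)%N.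
Proof.
move=> nN.
have H k : \sum_(i < n + k) f i = \sum_(i < n) f i + \sum_(i < k) f (n + i)%N.
  by rewrite big_split_ord.
by have := H (N - n)%N; rewrite (subnKC nN).
Qed.

Lemma F4 n N (c : nat -> R) : (n <= N)%N ->
  sW (st n) (\sum_(i < N) c i *: bF i) -> forall i, (i < n)%N -> `|c i| < 1.
Proof.
move=> nN; rewrite (sum_split (fun i => c i *: bF i) nN) => Hs; apply: F1.
case: (st_inv n) => _ _ Wb WP _.
have := WP _ _ Hs (bal_opp Wb (tail (N - n)%N n c)).
by rewrite addrK.
Qed.

Lemma sum_ind (x : nat -> E) N j (a : R) : (j < N)%N ->
  \sum_(i < N) (if (i == j :> nat) then a else 0) *: x i = a *: x j.
Proof.
move=> jN; rewrite (bigD1 (Ordinal jN)) //= eqxx big1 ?addr0 // => k kj.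
by rewrite ifN ?scale0r // -(inj_eq val_inj).
Qed.

Lemma bF0 i : bF i != 0.
Proof.
apply/eqP => b0.
have := @F1 i.+1 (fun k => if k == i then 1 else 0).
rewrite sum_ind // scale1r b0 => H.
have : `|(if i == i then 1 else 0 : R)| < 1.
  apply: H => //; case: (st_inv i.+1) => P0 _ _ _ _; exact: nbhs_singleton.
by rewrite eqxx normr1 ltxx.
Qed.

Lemma P0n n : sP (st n) 0.
Proof. by case: (st_inv n) => P0 _ _ _ _; exact: nbhs_singleton. Qed.

Lemma indep N (c : nat -> R) : \sum_(i < N) c i *: bF i = 0 ->
  forall i, (i < N)%N -> c i = 0.
Proof.
move=> H0 i iN; apply/eqP; apply: contraT => ci0.
have ci : 0 < `|c i| by rewrite normr_gt0.
have := @F1 N (fun k => (2 / `|c i|) * c k).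
have -> : \sum_(k < N) (2 / `|c i| * c k) *: bF k = 0.
  rewrite -[RHS](scaler0 _ (2 / `|c i|)) -[in RHS]H0 scaler_sumr.
  by apply: eq_bigr => k _; rewrite scalerA.
move=> /(_ (P0n N) i iN).
rewrite normrM normrM (ger0_norm (ler0n _ 2)) normfV normr_id.
rewrite -mulrA mulVf ?gt_eqF // mulr1 => h; clear H0; lra.
Qed.

Lemma bF_inj : injective bF.
Proof.
have key i j : (i < j)%N -> bF i != bF j.
  move=> ij; apply/eqP => eq.
  pose c k := (if k == i then 1 else 0) + (if k == j then -1 else 0) : R.
  have := @indep j.+1 c _ i (ltnW ij).
  rewrite /c eqxx (ltn_eqF ij) addr0 => H.
  have : (1 : R) = 0.
    apply: H.
    have -> : \sum_(k < j.+1) c k *: bF k =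
      \sum_(k < j.+1) (if (k == i :> nat) then (1:R) else 0) *: bF k +
      \sum_(k < j.+1) (if (k == j :> nat) then (-1:R) else 0) *: bF k.
      by rewrite -big_split; apply: eq_bigr => k _; rewrite scalerDl.
    by rewrite (sum_ind _ _ (ltnW ij : (i < j.+1)%N)) (sum_ind _ _ (ltnSn j)) scale1r scaleN1r eq subrr.
  by move/eqP; rewrite oner_eq0.
move=> i j eq; case: (ltngtP i j) => // ij.
  by move: (key _ _ ij); rewrite eq eqxx.
by move: (key _ _ ij); rewrite eq eqxx.
Qed.

Lemma fin_bound (A : set nat) : finite_set A -> exists N, forall i, A i -> (i < N)%N.
Proof.
move=> fA; exists (\max_(i <- finmap.enum_fset (fset_set A)) i).+1 => i Ai.
rewrite ltnS (leq_bigmax_seq i) //.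
by rewrite in_fset_set // inE.
Qed.

Definition Bset := range bF.

Lemma repr (f : @lS R E Bset) : exists N, (forall i, (N <= i)%N -> set_val f (bF i) = 0) /\
  forall M, (N <= M)%N -> lK f = \sum_(i < M) set_val f (bF i) *: bF i.
Proof.
have [fsupp sB] : lS_set Bset (set_val f) by exact: set_valP.
set g := set_val f in fsupp sB *.
have fI : finite_set (bF @^-1` supp g).
  by apply: finite_preimage => // i j _ _; exact: bF_inj.
have [N HN] := fin_bound fI.
have g0 i : (N <= i)%N -> g (bF i) = 0.
  move=> Ni; apply/eqP; apply: contraT => gi.
  by have := HN i gi; rewrite ltnNge Ni.
exists N; split => // M NM.
rewrite /lK -/g (fsbig_widen _ (bF @` `I_M)).
- rewrite fsbig_image; last by move=> i j _ _; exact: bF_inj.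
  by rewrite -fsbig_ord.
- move=> x sx; have [i _ xi] := sB _ sx; exists i => //.
  rewrite /= (leq_trans _ NM) // HN //= /preimage /= xi //.
- move=> x [[i _ <-] nsx] /=.
  have /negP : ~ (g (bF i) != 0) := nsx.
  by rewrite negbK => /eqP ->; rewrite scale0r.
Qed.

Lemma ev_nbhs (f : @lS R E Bset) (x : E) (e : R) : 0 < e ->
  nbhs f [set g : @lS R E Bset | `|set_val g x - set_val f x| < e].
Proof.
move=> e0.
have hc : continuous (fun g : @lS R E Bset => (set_val g : {ptws E -> R}) x).
  move=> g.
  apply: (@continuous_comp (@lS R E Bset) {ptws E -> R} R set_val (proj x)).
    exact: (@initial_continuous _ {ptws E -> R} set_val).
  exact: proj_continuous.
have := hc f (ball (set_val f x) e) (nbhsx_ballx _ _ e0).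
move=> H; apply: (@filterS _ (nbhs f) _ ((fun g : @lS R E Bset => (set_val g : {ptws E -> R}) x) @^-1` ball (set_val f x) e)); last exact: H.
by move=> g; rewrite /ball /= distrC.
Qed.

Lemma nbhs_coords (f : @lS R E Bset) (m : nat) (d : R) : 0 < d ->
  nbhs f [set g : @lS R E Bset | forall i, (i < m)%N ->
     `|set_val g (bF i) - set_val f (bF i)| < d].
Proof.
move=> d0; elim: m => [|m IH].
  apply: (@filterS _ (nbhs f) _ setT); first by move=> g _ i.
  exact: filterT.
apply: (@filterS _ (nbhs f) _ (
  [set g : @lS R E Bset | forall i, (i < m)%N -> `|set_val g (bF i) - set_val f (bF i)| < d]
  `&` [set g : @lS R E Bset | `|set_val g (bF m) - set_val f (bF m)| < d])).
  move=> g [h1 h2] i; rewrite ltnS leq_eqVlt => /orP [/eqP -> //|im].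
  exact: h1.
exact: filterI IH (ev_nbhs _ _ d0).
Qed.

Lemma lK_cont : continuous (@lK R E Bset).
Proof.
move=> f U hU.
have U0 := trans_nbhs hU.
have [V1 [V10 VV]] := add0_nbhs U0.
have [F [Ffin FS Hsp]] := realspan hS V10.
have fF : finite_set (bF @^-1` F).
  by apply: finite_preimage => // i j _ _; exact: bF_inj.
have [m Hm] := fin_bound fF.
have [d d0 Hd] := fincomb bF m V10.
apply: (@filterS _ (nbhs f) _ [set g : @lS R E Bset | forall i, (i < m)%N ->
     `|set_val g (bF i) - set_val f (bF i)| < d]); last exact: nbhs_coords.
move=> g hg /=.
have [Nf [_ Hf]] := repr f; have [Ng [_ Hg]] := repr g.
pose M := maxn (maxn Nf Ng) m.
have NfM : (Nf <= M)%N by rewrite /M !leq_max leqnn.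
have NgM : (Ng <= M)%N by rewrite /M !leq_max leqnn orbT.
have mM : (m <= M)%N by rewrite /M !leq_max leqnn orbT.
suff : U (lK f + (lK g - lK f)) by rewrite addrC subrK.
rewrite (Hg M NgM) {2}(Hf M NfM) -sumrB.
have -> : \sum_(i < M) (set_val g (bF i) *: bF i - set_val f (bF i) *: bF i) =
  \sum_(i < M) (set_val g (bF i) - set_val f (bF i)) *: bF i.
  by apply: eq_bigr => i _; rewrite scalerBl.
rewrite (sum_split (fun i => (set_val g (bF i) - set_val f (bF i)) *: bF i) mM).
apply: VV.
  by apply: (Hd (fun i => set_val g (bF i) - set_val f (bF i))).
apply: (Hsp _ (fun i => bF (m + i)%N) (fun i => set_val g (bF (m + i)%N) - set_val f (bF (m + i)%N))).
move=> i _; split; first exact: bS.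
by move=> /Hm; rewrite ltnNge leq_addr.
Qed.

Lemma lK_open_at (f : @lS R E Bset) (U : set (@lS R E Bset)) : nbhs f U ->
  exists V : set E, nbhs (lK f) V /\ forall g, V (lK g) -> U g.
Proof.
move=> [Z [ [W oW <-] Wf] sub].
pose G : set_system {ptws E -> R} := [set A | exists V : set E, nbhs (lK f) V /\
   forall g : @lS R E Bset, V (lK g) -> A (set_val g)].
have FG : Filter G.
  constructor.
  - by exists setT; split => //; exact: filterT.
  - move=> A1 A2 [V1 [V1f H1]] [V2 [V2f H2]].
    exists (V1 `&` V2); split; first exact: filterI.
    by move=> g [/H1 ? /H2 ?].
  - move=> P Q PQ [V [Vf HV]]; exists V; split => // g /HV; exact: PQ.
have cvgG : G --> (set_val f : {ptws E -> R}).
  apply: (@ptws_cvg_coord R E G _ FG) => x e e0.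
  case: (pselect (Bset x)) => [[k _ <-] | nB].
    case: (st_inv k.+1) => _ W0 _ _ _.
    exists [set y | sW (st k.+1) (e^-1 *: (y - lK f))]; split.
      by apply: (@transB_nbhs [set z | sW (st k.+1) (e^-1 *: z)] (lK f)); exact: scaleby_nbhs.
    move=> g /= Hg.
    have [Nf [_ Hf]] := repr f; have [Ng [_ Hgr]] := repr g.
    pose M := maxn (maxn Nf Ng) k.+1.
    have NfM : (Nf <= M)%N by rewrite /M !leq_max leqnn.
    have NgM : (Ng <= M)%N by rewrite /M !leq_max leqnn orbT.
    have kM : (k.+1 <= M)%N by rewrite /M !leq_max leqnn orbT.
    move: Hg; rewrite (Hgr M NgM) (Hf M NfM) -sumrB scaler_sumr.
    have -> : \sum_(i < M) e^-1 *: (set_val g (bF i) *: bF i - set_val f (bF i) *: bF i) =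
      \sum_(i < M) (e^-1 * (set_val g (bF i) - set_val f (bF i))) *: bF i.
      by apply: eq_bigr => i _; rewrite -scalerBl scalerA.
    move=> /(@F4 k.+1 M (fun i => e^-1 * (set_val g (bF i) - set_val f (bF i))) kM) /(_ k (ltnSn k)).
    rewrite normrM gtr0_norm ?invr_gt0 // => h.
    have : e * (e^-1 * `|set_val g (bF k) - set_val f (bF k)|) < e * 1 by rewrite ltr_pM2l.
    by rewrite mulrA divff ?gt_eqF // mul1r mulr1.
  exists setT; split; first exact: filterT.
  move=> g _ /=.
  have z (h : @lS R E Bset) : set_val h x = 0.
    have [_ sB] : lS_set Bset (set_val h) by exact: set_valP.
    by apply/eqP; apply: contraT => hx; exfalso; apply: nB; exact: sB.
  by rewrite !z subrr normr0.
have [V [Vf HV]] : G W by apply: cvgG; exact: open_nbhs_nbhs.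
by exists V; split => // g /HV; exact: sub.
Qed.

Lemma lK_inj : injective (@lK R E Bset).
Proof.
move=> f g eq.
have [Nf [Hf0 Hf]] := repr f; have [Ng [Hg0 Hg]] := repr g.
pose M := maxn Nf Ng.
have NfM : (Nf <= M)%N by rewrite /M leq_max leqnn.
have NgM : (Ng <= M)%N by rewrite /M leq_max leqnn orbT.
have H0 : \sum_(i < M) (set_val g (bF i) - set_val f (bF i)) *: bF i = 0.
  have -> : \sum_(i < M) (set_val g (bF i) - set_val f (bF i)) *: bF i =
     \sum_(i < M) set_val g (bF i) *: bF i - \sum_(i < M) set_val f (bF i) *: bF i.
    by rewrite -sumrB; apply: eq_bigr => i _; rewrite scalerBl.
  by rewrite -(Hg M NgM) -(Hf M NfM) eq subrr.
have Hc := @indep M (fun i => set_val g (bF i) - set_val f (bF i)) H0.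
apply: val_inj; rewrite -!set_valE.
apply: functional_extensionality_dep => x.
have z (h : @lS R E Bset) : ~ Bset x -> set_val h x = 0.
  move=> nB; have [_ sB] : lS_set Bset (set_val h) by exact: set_valP.
  by apply/eqP; apply: contraT => hx; exfalso; apply: nB; exact: sB.
case: (pselect (Bset x)) => [[k _ <-] | nB]; last by rewrite !z.
case: (ltnP k M) => kM.
  by apply/esym/eqP; rewrite -subr_eq0; apply/eqP; exact: Hc.
by rewrite Hf0 ?Hg0 // (leq_trans _ kM).
Qed.

Lemma lK_embed : topological_embedding (@lK R E Bset).
Proof.
split; [exact: lK_inj | exact: lK_cont |].
move=> U oU.
pose V := [set y : E | exists f : @lS R E Bset, U f /\ exists W : set E,
   [/\ nbhs (lK f) W, (forall g, W (lK g) -> U g) & (interior W) y]].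
exists V; split.
  rewrite openE => y [f [Uf [W [Wn WU Wy]]]].
  have : nbhs y (interior W) by exact: nbhs_interior.
  apply: filterS => z Wz; exists f; split => //; exists W; split => //.
apply/seteqP; split.
  move=> f Uf.
  have : nbhs f U by move: oU; rewrite openE => /(_ f Uf).
  move=> /lK_open_at [W [Wn WU]].
  by exists f; split => //; exists W; split.
move=> g [f [Uf [W [Wn WU Wy]]]].
by apply: WU; exact: nbhs_singleton.
Qed.

Lemma B_props : [/\ Bset `<=` S, ~ Bset 0 & infinite_set Bset].
Proof.
split.
- by move=> _ [i _ <-]; exact: bS.
- by move=> [i _ e]; move: (bF0 i); rewrite e eqxx.
- move=> fB; apply: infinite_nat.
  have -> : [set: nat] = bF @^-1` Bset by apply/seteqP; split => // i _; exists i.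
  by apply: finite_preimage => // i j _ _; exact: bF_inj.
Qed.
End Construction.
End Basics.

Unset Implicit Arguments.

Theorem theorem10p4 (R : realType) (E : topologicalLmodType R)
  (hE : hausdorff_space E) (S : set E) :
  infinite_set S -> abs_cauchy_summable S ->
  exists B : set E,
    [/\ B `<=` S, ~ B 0, infinite_set B & topological_embedding (@lK R E B)].
Proof.
move=> Sinf hS.
exists (Bset hE Sinf hS).
have [h1 h2 h3] := B_props hE Sinf hS.
by split => //; exact: lK_embed.
Qed.
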